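(* Let $S$ be a closed session type with $S\neq\mathsf{end}$. Then there is no monitor $M$ that is both sound and complete for $S$; that is, there is no monitor $M$ such that (soundness) for every process $P$, if $\langle P;M\rangle\xRightarrow{t}\langle P';\mathsf{no}_P\rangle$ for some trace $t$ and process $P'$ then $\emptyset\cdot\emptyset\vdash P:S$ is not derivable, and (completeness) for every process $P$, if $\emptyset\cdot\emptyset\vdash P:S$ is not derivable then there exist a trace $t$ and process $P'$ with $\langle P;M\rangle\xRightarrow{t}\langle P';\mathsf{no}_P\rangle$.
   Context: Values $v$ (including tuples), value variables $x$, process variables $X$; $a$ ranges over values and value variables. Boolean predicates $A$ include $\mathsf{tt},\mathsf{ff}$, comparisons, conjunction, negation; $A\Downarrow\mathsf{tt}$ / $A\Downarrow\mathsf{ff}$ denote evaluation; predicates are type-checked by standard rules. Processes: $P,Q ::= \triangleleft \mathtt{l}(a).P \mid \triangleright\{\mathtt{l}_i(x_i).P_i\}_{i\in I} \mid \mu_X.P \mid X \mid \mathsf{if}\ A\ \mathsf{then}\ P\ \mathsf{else}\ Q \mid \mathbf{0}$, guarded recursion. Transitions: $\mu_X.P \xrightarrow{\tau} P[\mu_X.P/X]$; $\triangleleft\mathtt{l}(v).P \xrightarrow{\triangleleft \mathtt{l}(v)} P$; $\triangleright\{\mathtt{l}_i(x_i).P_i\}_{i\in I} \xrightarrow{\triangleright \mathtt{l}_j(v)} P_j[v/x_j]$ for $j\in I$; $\mathsf{if}\ A\ \mathsf{then}\ P\ \mathsf{else}\ Q \xrightarrow{\tau} P$ if $A\Downarrow\mathsf{tt}$,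 $\xrightarrow{\tau} Q$ if $A\Downarrow\mathsf{ff}$. Base types $\mathsf{B} ::= \mathsf{Int}\mid\mathsf{Str}\mid\mathsf{Bool}\mid\dots\mid(\mathsf{B},\mathsf{B})$. Session types $S ::= \oplus\{!\mathtt{l}_i(\mathsf{B}_i).S_i\}_{i\in I} \mid \&\{?\mathtt{l}_i(\mathsf{B}_i).S_i\}_{i\in I} \mid \mathsf{rec}\ X.S \mid X \mid \mathsf{end}$, $I\neq\emptyset$, labels pairwise distinct, guarded recursion; types are equi-recursive ($\mathsf{rec}\ X.S$ identified with its unfolding), so ''$S\neq\mathsf{end}$'' is understood up to this identification. Typing with $\Theta$ (process variables to session types) and $\Gamma$ (value variables to base types): $\Gamma\vdash x:\mathsf{B}$ if $\Gamma(x)=\mathsf{B}$; $\Gamma\vdash v:\mathsf{B}$ if $v\in\mathsf{B}$. (tBra) if for all $i\in I$, $\Theta\cdot\Gamma,x_i:\mathsf{B}_i\vdash P_i:S_i$, then $\Theta\cdot\Gamma\vdash \triangleright\{\mathtt{l}_i(x_i).P_i\}_{i\in I\cup J} : \&\{?\mathtt{l}_i(\mathsf{B}_i).S_i\}_{i\in I}$; (tSel) if some $i\in I$ has $\mathtt{l}=\mathtt{l}_i$, $\Gamma\vdash a:\mathsf{B}_i$, $\Theta\cdot\Gamma\vdash P:S_i$, then $\Theta\cdot\Gamma\vdash \triangleleft\mathtt{l}(a).P : \oplus\{!\mathtt{l}_i(\mathsf{B}_i).S_i\}_{i\in I}$; (tRec) $\Theta,X:S\cdot\Gamma\vdash P:S$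 implies $\Theta\cdot\Gamma\vdash\mu_X.P:S$; (tPVar) $\Theta(X)=S$ implies $\Theta\cdot\Gamma\vdash X:S$; (tIf) $\Gamma\vdash A:\mathsf{Bool}$, $\Theta\cdot\Gamma\vdash P:S$, $\Theta\cdot\Gamma\vdash Q:S$ imply $\Theta\cdot\Gamma\vdash \mathsf{if}\ A\ \mathsf{then}\ P\ \mathsf{else}\ Q:S$; (tNil) $\Theta\cdot\Gamma\vdash\mathbf{0}:\mathsf{end}$. Monitors: $M,N ::= \triangleleft\mathtt{l}(a).M \mid \triangleright\{\mathtt{l}_i(x_i).M_i\}_{i\in I} \mid \blacktriangle\mathtt{l}(a).M \mid \blacktriangledown\{\mathtt{l}_i(x_i).M_i\}_{i\in I} \mid \mu_X.M \mid X \mid \mathsf{if}\ A\ \mathsf{then}\ M\ \mathsf{else}\ N \mid \mathbf{0} \mid \mathsf{no}_P \mid \mathsf{no}_E$ ($\triangleleft,\triangleright$: send to / receive from the monitored process; $\blacktriangle,\blacktriangledown$: send to / receive from the environment). Transitions: $\triangleleft\mathtt{l}(v).M\xrightarrow{\triangleleft\mathtt{l}(v)}M$; $\blacktriangle\mathtt{l}(v).M\xrightarrow{\blacktriangle\mathtt{l}(v)}M$; $\mu_X.M\xrightarrow{\tau}M[\mu_X.M/X]$; $\triangleright\{\mathtt{l}_i(x_i).M_i\}_{i\in I}\xrightarrow{\triangleright\mathtt{l}_j(v)}M_j[v/x_j]$, $\blacktriangledown\{\mathtt{l}_i(x_i).M_i\}_{i\in I}\xrightarrow{\blacktriangledown\mathtt{l}_j(v)}M_j[v/x_j]$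 for $j\in I$; conditionals as for processes; $\triangleright\{\mathtt{l}_i(x_i).M_i\}_{i\in I}\xrightarrow{\triangleright\mathtt{l}(v)}\mathsf{no}_P$ and $\blacktriangledown\{\mathtt{l}_i(x_i).M_i\}_{i\in I}\xrightarrow{\blacktriangledown\mathtt{l}(v)}\mathsf{no}_E$ whenever $\mathtt{l}\neq\mathtt{l}_i$ for all $i\in I$. Composite system $\langle P;M\rangle$: $P\xrightarrow{\triangleleft\mathtt{l}(v)}P'$, $M\xrightarrow{\triangleright\mathtt{l}(v)}M'$ give $\langle P;M\rangle\xrightarrow{\tau}\langle P';M'\rangle$; $P\xrightarrow{\triangleright\mathtt{l}(v)}P'$, $M\xrightarrow{\triangleleft\mathtt{l}(v)}M'$ give $\langle P;M\rangle\xrightarrow{\tau}\langle P';M'\rangle$; $M\xrightarrow{\alpha}M'$ with $\alpha\in\{\blacktriangle\mathtt{l}(v),\blacktriangledown\mathtt{l}(v)\}$ gives $\langle P;M\rangle\xrightarrow{\alpha}\langle P;M'\rangle$; $\tau$-moves of $P$ or $M$ alone lift to $\langle P;M\rangle$. A trace $t$ is a finite sequence of actions $\blacktriangle\mathtt{l}(v),\blacktriangledown\mathtt{l}(v)$; $\xRightarrow{t}$ interleaves $t$ with finitely many $\tau$-transitions. *)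

(* Defs.v *)
(* Syntax uses de Bruijn indices for value variables,
   process variables and session-type variables (so that all substitutions
   are capture-avoiding, as in the paper's up-to-alpha convention). *)
From Stdlib Require Import ZArith String List Bool Arith.
Import ListNotations.

Definition label := nat.

Inductive base : Type :=
| BInt | BStr | BBool | BPair (B1 B2 : base).

Inductive value : Type :=
| VInt (z : Z) | VStr (s : string) | VBool (b : bool) | VPair (v1 v2 : value).

Fixpoint value_in (v : value) (B : base) : Prop :=
  match v, B with
  | VInt _, BInt => True
  | VStr _, BStr => True
  | VBool _, BBool => True
  | VPair v1 v2, BPair B1 B2 => value_in v1 B1 /\ value_in v2 B2
  | _, _ => False
  end.

Fixpoint value_eqb (v w : value) : bool :=
  match v, w with
  | VInt a, VInt b => Z.eqb a b
  | VStr a, VStr b => String.eqb a b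
  | VBool a, VBool b => Bool.eqb a b
  | VPair a1 a2, VPair b1 b2 => value_eqb a1 b1 && value_eqb a2 b2
  | _, _ => false
  end.

Inductive vterm : Type := TVal (v : value) | TVar (x : nat).

Inductive pred : Type :=
| ATT | AFF
| AEq (a b : vterm) | ALt (a b : vterm) | ALe (a b : vterm)
| AAnd (A1 A2 : pred) | ANot (A : pred).

Definition vterm_eval (a : vterm) : option value :=
  match a with TVal v => Some v | TVar _ => None end.

(* A evaluates to Some true (A ⇓ tt) or Some false (A ⇓ ff); None = stuck *)
Fixpoint pred_eval (A : pred) : option bool :=
  match A with
  | ATT => Some true
  | AFF => Some false
  | AEq a b => match vterm_eval a, vterm_eval b with
               | Some v, Some w => Some (value_eqb v w) | _, _ => None end
  | ALt a b => match vterm_eval a, vterm_eval b with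
               | Some (VInt x), Some (VInt y) => Some (Z.ltb x y) | _, _ => None end
  | ALe a b => match vterm_eval a, vterm_eval b with
               | Some (VInt x), Some (VInt y) => Some (Z.leb x y) | _, _ => None end
  | AAnd A1 A2 => match pred_eval A1, pred_eval A2 with
                  | Some x, Some y => Some (x && y) | _, _ => None end
  | ANot A => option_map negb (pred_eval A)
  end.

Definition vterm_has_type (G : list base) (a : vterm) (B : base) : Prop :=
  match a with
  | TVal v => value_in v B
  | TVar x => nth_error G x = Some B
  end.

Inductive pred_bool (G : list base) : pred -> Prop :=
| pb_tt : pred_bool G ATT
| pb_ff : pred_bool G AFF
| pb_eq a b B : vterm_has_type G a B -> vterm_has_type G b B -> pred_bool G (AEq a b)
| pb_lt a b : vterm_has_type G a BInt -> vterm_has_type G b BInt -> pred_bool G (ALt a b)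
| pb_le a b : vterm_has_type G a BInt -> vterm_has_type G b BInt -> pred_bool G (ALe a b)
| pb_and A1 A2 : pred_bool G A1 -> pred_bool G A2 -> pred_bool G (AAnd A1 A2)
| pb_not A : pred_bool G A -> pred_bool G (ANot A).

Fixpoint pred_map (f : vterm -> vterm) (A : pred) : pred :=
  match A with
  | ATT => ATT | AFF => AFF
  | AEq a b => AEq (f a) (f b)
  | ALt a b => ALt (f a) (f b)
  | ALe a b => ALe (f a) (f b)
  | AAnd A1 A2 => AAnd (pred_map f A1) (pred_map f A2)
  | ANot A => ANot (pred_map f A)
  end.

Definition vterm_vsubst (k : nat) (v : value) (a : vterm) : vterm :=
  match a with
  | TVal w => TVal w
  | TVar x => if Nat.eqb x k then TVal v
              else if Nat.ltb k x then TVar (Nat.pred x) else TVar x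
  end.

Definition vterm_vshift (c : nat) (a : vterm) : vterm :=
  match a with
  | TVal w => TVal w
  | TVar x => if Nat.leb c x then TVar (S x) else TVar x
  end.

(* PSel l a P        = ◁ l(a).P
   PBra [(l_i,P_i)]  = ▷ {l_i(x_i).P_i}  (x_i is de Bruijn index 0 in P_i)
   PRec P            = μ_X.P              (X is process index 0 in P) *)
Inductive proc : Type :=
| PSel (l : label) (a : vterm) (P : proc)
| PBra (bs : list (label * proc))
| PRec (P : proc)
| PVar (X : nat)
| PIf (A : pred) (P Q : proc)
| PNil.

Fixpoint proc_vshift (c : nat) (P : proc) : proc :=
  match P with
  | PSel l a P => PSel l (vterm_vshift c a) (proc_vshift c P)
  | PBra bs => PBra (map (fun '(l, P') => (l, proc_vshift (S c) P')) bs)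
  | PRec P => PRec (proc_vshift c P)
  | PVar X => PVar X
  | PIf A P Q => PIf (pred_map (vterm_vshift c) A) (proc_vshift c P) (proc_vshift c Q)
  | PNil => PNil
  end.

Fixpoint proc_vsubst (k : nat) (v : value) (P : proc) : proc :=
  match P with
  | PSel l a P => PSel l (vterm_vsubst k v a) (proc_vsubst k v P)
  | PBra bs => PBra (map (fun '(l, P') => (l, proc_vsubst (S k) v P')) bs)
  | PRec P => PRec (proc_vsubst k v P)
  | PVar X => PVar X
  | PIf A P Q => PIf (pred_map (vterm_vsubst k v) A) (proc_vsubst k v P) (proc_vsubst k v Q)
  | PNil => PNil
  end.

Fixpoint proc_pshift (c : nat) (P : proc) : proc :=
  match P with
  | PSel l a P => PSel l a (proc_pshift c P)
  | PBra bs => PBra (map (fun '(l, P') => (l, proc_pshift c P')) bs)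
  | PRec P => PRec (proc_pshift (S c) P)
  | PVar X => if Nat.leb c X then PVar (S X) else PVar X
  | PIf A P Q => PIf A (proc_pshift c P) (proc_pshift c Q)
  | PNil => PNil
  end.

Fixpoint proc_psubst (k : nat) (Q : proc) (P : proc) : proc :=
  match P with
  | PSel l a P => PSel l a (proc_psubst k Q P)
  | PBra bs => PBra (map (fun '(l, P') => (l, proc_psubst k (proc_vshift 0 Q) P')) bs)
  | PRec P => PRec (proc_psubst (S k) (proc_pshift 0 Q) P)
  | PVar X => if Nat.eqb X k then Q
              else if Nat.ltb k X then PVar (Nat.pred X) else PVar X
  | PIf A P1 P2 => PIf A (proc_psubst k Q P1) (proc_psubst k Q P2)
  | PNil => PNil
  end.

Fixpoint proc_guarded_in (k : nat) (P : proc) : Prop :=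
  match P with
  | PSel _ _ _ => True
  | PBra _ => True
  | PRec P => proc_guarded_in (S k) P
  | PVar X => X <> k
  | PIf _ P Q => proc_guarded_in k P /\ proc_guarded_in k Q
  | PNil => True
  end.

Fixpoint proc_wf (P : proc) : Prop :=
  match P with
  | PSel _ _ P => proc_wf P
  | PBra bs => (fix go (bs : list (label * proc)) : Prop :=
                  match bs with
                  | [] => True
                  | (_, P') :: bs' => proc_wf P' /\ go bs'
                  end) bs
  | PRec P => proc_guarded_in 0 P /\ proc_wf P
  | PVar _ => True
  | PIf _ P Q => proc_wf P /\ proc_wf Q
  | PNil => True
  end.

Inductive pact : Type :=
| PaTau
| PaSnd (l : label) (v : value)
| PaRcv (l : label) (v : value).

Inductive proc_step : proc -> pact -> proc -> Prop :=
| ps_rec P : proc_step (PRec P) PaTau (proc_psubst 0 (PRec P) P)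
| ps_sel l v P : proc_step (PSel l (TVal v) P) (PaSnd l v) P
| ps_bra bs l P v : In (l, P) bs -> proc_step (PBra bs) (PaRcv l v) (proc_vsubst 0 v P)
| ps_if_t A P Q : pred_eval A = Some true -> proc_step (PIf A P Q) PaTau P
| ps_if_f A P Q : pred_eval A = Some false -> proc_step (PIf A P Q) PaTau Q.

(* MSndP = ◁ (to process), MRcvP = ▷ (from process),
   MUp = ▲ (to environment), MDown = ▼ (from environment) *)
Inductive mon : Type :=
| MSndP (l : label) (a : vterm) (M : mon)
| MRcvP (bs : list (label * mon))
| MUp (l : label) (a : vterm) (M : mon)
| MDown (bs : list (label * mon))
| MRec (M : mon)
| MVar (X : nat)
| MIf (A : pred) (M N : mon)
| MNil
| MNoP
| MNoE.

Fixpoint mon_vshift (c : nat) (M : mon) : mon :=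
  match M with
  | MSndP l a M => MSndP l (vterm_vshift c a) (mon_vshift c M)
  | MRcvP bs => MRcvP (map (fun '(l, M') => (l, mon_vshift (S c) M')) bs)
  | MUp l a M => MUp l (vterm_vshift c a) (mon_vshift c M)
  | MDown bs => MDown (map (fun '(l, M') => (l, mon_vshift (S c) M')) bs)
  | MRec M => MRec (mon_vshift c M)
  | MVar X => MVar X
  | MIf A M N => MIf (pred_map (vterm_vshift c) A) (mon_vshift c M) (mon_vshift c N)
  | MNil => MNil | MNoP => MNoP | MNoE => MNoE
  end.

Fixpoint mon_vsubst (k : nat) (v : value) (M : mon) : mon :=
  match M with
  | MSndP l a M => MSndP l (vterm_vsubst k v a) (mon_vsubst k v M)
  | MRcvP bs => MRcvP (map (fun '(l, M') => (l, mon_vsubst (S k) v M')) bs)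
  | MUp l a M => MUp l (vterm_vsubst k v a) (mon_vsubst k v M)
  | MDown bs => MDown (map (fun '(l, M') => (l, mon_vsubst (S k) v M')) bs)
  | MRec M => MRec (mon_vsubst k v M)
  | MVar X => MVar X
  | MIf A M N => MIf (pred_map (vterm_vsubst k v) A) (mon_vsubst k v M) (mon_vsubst k v N)
  | MNil => MNil | MNoP => MNoP | MNoE => MNoE
  end.

Fixpoint mon_pshift (c : nat) (M : mon) : mon :=
  match M with
  | MSndP l a M => MSndP l a (mon_pshift c M)
  | MRcvP bs => MRcvP (map (fun '(l, M') => (l, mon_pshift c M')) bs)
  | MUp l a M => MUp l a (mon_pshift c M)
  | MDown bs => MDown (map (fun '(l, M') => (l, mon_pshift c M')) bs)
  | MRec M => MRec (mon_pshift (S c) M)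
  | MVar X => if Nat.leb c X then MVar (S X) else MVar X
  | MIf A M N => MIf A (mon_pshift c M) (mon_pshift c N)
  | MNil => MNil | MNoP => MNoP | MNoE => MNoE
  end.

Fixpoint mon_psubst (k : nat) (Q : mon) (M : mon) : mon :=
  match M with
  | MSndP l a M => MSndP l a (mon_psubst k Q M)
  | MRcvP bs => MRcvP (map (fun '(l, M') => (l, mon_psubst k (mon_vshift 0 Q) M')) bs)
  | MUp l a M => MUp l a (mon_psubst k Q M)
  | MDown bs => MDown (map (fun '(l, M') => (l, mon_psubst k (mon_vshift 0 Q) M')) bs)
  | MRec M => MRec (mon_psubst (S k) (mon_pshift 0 Q) M)
  | MVar X => if Nat.eqb X k then Q
              else if Nat.ltb k X then MVar (Nat.pred X) else MVar X
  | MIf A M1 M2 => MIf A (mon_psubst k Q M1) (mon_psubst k Q M2)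
  | MNil => MNil | MNoP => MNoP | MNoE => MNoE
  end.

Fixpoint mon_guarded_in (k : nat) (M : mon) : Prop :=
  match M with
  | MSndP _ _ _ | MRcvP _ | MUp _ _ _ | MDown _ => True
  | MRec M => mon_guarded_in (S k) M
  | MVar X => X <> k
  | MIf _ M N => mon_guarded_in k M /\ mon_guarded_in k N
  | MNil | MNoP | MNoE => True
  end.

Fixpoint mon_wf (M : mon) : Prop :=
  match M with
  | MSndP _ _ M => mon_wf M
  | MUp _ _ M => mon_wf M
  | MRcvP bs | MDown bs =>
      (fix go (bs : list (label * mon)) : Prop :=
         match bs with
         | [] => True
         | (_, M') :: bs' => mon_wf M' /\ go bs'
         end) bs
  | MRec M => mon_guarded_in 0 M /\ mon_wf M
  | MVar _ => True
  | MIf _ M N => mon_wf M /\ mon_wf N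
  | MNil | MNoP | MNoE => True
  end.

Inductive mact : Type :=
| MaTau
| MaSndP (l : label) (v : value)
| MaRcvP (l : label) (v : value)
| MaUp (l : label) (v : value)
| MaDown (l : label) (v : value).

Inductive mon_step : mon -> mact -> mon -> Prop :=
| ms_sndP l v M : mon_step (MSndP l (TVal v) M) (MaSndP l v) M
| ms_up l v M : mon_step (MUp l (TVal v) M) (MaUp l v) M
| ms_rec M : mon_step (MRec M) MaTau (mon_psubst 0 (MRec M) M)
| ms_rcvP bs l M v : In (l, M) bs -> mon_step (MRcvP bs) (MaRcvP l v) (mon_vsubst 0 v M)
| ms_down bs l M v : In (l, M) bs -> mon_step (MDown bs) (MaDown l v) (mon_vsubst 0 v M)
| ms_if_t A M N : pred_eval A = Some true -> mon_step (MIf A M N) MaTau M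
| ms_if_f A M N : pred_eval A = Some false -> mon_step (MIf A M N) MaTau N
| ms_rcvP_fail bs l v : ~ In l (map fst bs) -> mon_step (MRcvP bs) (MaRcvP l v) MNoP
| ms_down_fail bs l v : ~ In l (map fst bs) -> mon_step (MDown bs) (MaDown l v) MNoE.

Inductive ext_act : Type :=
| EUp (l : label) (v : value)
| EDown (l : label) (v : value).

Inductive sys_act : Type := STau | SExt (e : ext_act).

Inductive sys : Type := Sys (P : proc) (M : mon).

Inductive sys_step : sys -> sys_act -> sys -> Prop :=
| ss_p2m P P' M M' l v :
    proc_step P (PaSnd l v) P' -> mon_step M (MaRcvP l v) M' ->
    sys_step (Sys P M) STau (Sys P' M')
| ss_m2p P P' M M' l v :
    proc_step P (PaRcv l v) P' -> mon_step M (MaSndP l v) M' ->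
    sys_step (Sys P M) STau (Sys P' M')
| ss_up P M M' l v :
    mon_step M (MaUp l v) M' -> sys_step (Sys P M) (SExt (EUp l v)) (Sys P M')
| ss_down P M M' l v :
    mon_step M (MaDown l v) M' -> sys_step (Sys P M) (SExt (EDown l v)) (Sys P M')
| ss_tauP P P' M : proc_step P PaTau P' -> sys_step (Sys P M) STau (Sys P' M)
| ss_tauM P M M' : mon_step M MaTau M' -> sys_step (Sys P M) STau (Sys P M').

Inductive sys_weak : sys -> list ext_act -> sys -> Prop :=
| sw_refl s : sys_weak s [] s
| sw_tau s s1 t s2 : sys_step s STau s1 -> sys_weak s1 t s2 -> sys_weak s t s2
| sw_ext s e s1 t s2 : sys_step s (SExt e) s1 -> sys_weak s1 t s2 -> sys_weak s (e :: t) s2.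

(* STSel [(l_i,B_i,S_i)] = ⊕{!l_i(B_i).S_i},  STBra = &{?l_i(B_i).S_i},
   STRec T0 = rec X.T0 (X is index 0 in T0) *)
Inductive stype : Type :=
| STSel (bs : list (label * base * stype))
| STBra (bs : list (label * base * stype))
| STRec (T0 : stype)
| STVar (X : nat)
| STEnd.

Fixpoint st_shift (c : nat) (T0 : stype) : stype :=
  match T0 with
  | STSel bs => STSel (map (fun '(l, B, T1) => (l, B, st_shift c T1)) bs)
  | STBra bs => STBra (map (fun '(l, B, T1) => (l, B, st_shift c T1)) bs)
  | STRec T0 => STRec (st_shift (Datatypes.S c) T0)
  | STVar X => if Nat.leb c X then STVar (Datatypes.S X) else STVar X
  | STEnd => STEnd
  end.

Fixpoint st_subst (k : nat) (U : stype) (T0 : stype) : stype :=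
  match T0 with
  | STSel bs => STSel (map (fun '(l, B, T1) => (l, B, st_subst k U T1)) bs)
  | STBra bs => STBra (map (fun '(l, B, T1) => (l, B, st_subst k U T1)) bs)
  | STRec T0 => STRec (st_subst (Datatypes.S k) (st_shift 0 U) T0)
  | STVar X => if Nat.eqb X k then U
               else if Nat.ltb k X then STVar (Nat.pred X) else STVar X
  | STEnd => STEnd
  end.

Fixpoint st_closed_at (n : nat) (T0 : stype) : Prop :=
  match T0 with
  | STSel bs | STBra bs =>
      (fix go (bs : list (label * base * stype)) : Prop :=
         match bs with
         | [] => True
         | (_, _, T1) :: bs' => st_closed_at n T1 /\ go bs'
         end) bs
  | STRec T0 => st_closed_at (Datatypes.S n) T0
  | STVar X => X < n
  | STEnd => True
  end.

Definition st_closed (T0 : stype) : Prop := st_closed_at 0 T0.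

Fixpoint st_guarded_in (k : nat) (T0 : stype) : Prop :=
  match T0 with
  | STSel _ | STBra _ => True
  | STRec T0 => st_guarded_in (Datatypes.S k) T0
  | STVar X => X <> k
  | STEnd => True
  end.

Fixpoint st_wf (T0 : stype) : Prop :=
  match T0 with
  | STSel bs | STBra bs =>
      bs <> [] /\ NoDup (map (fun '(l, _, _) => l) bs) /\
      (fix go (bs : list (label * base * stype)) : Prop :=
         match bs with
         | [] => True
         | (_, _, T1) :: bs' => st_wf T1 /\ go bs'
         end) bs
  | STRec T0 => st_guarded_in 0 T0 /\ st_wf T0
  | STVar _ => True
  | STEnd => True
  end.

Inductive st_unf : stype -> stype -> Prop :=
| unf_sel bs : st_unf (STSel bs) (STSel bs)
| unf_bra bs : st_unf (STBra bs) (STBra bs)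
| unf_var X : st_unf (STVar X) (STVar X)
| unf_end : st_unf STEnd STEnd
| unf_rec T0 H : st_unf (st_subst 0 (STRec T0) T0) H -> st_unf (STRec T0) H.

(* equi-recursive type identification: equality of the infinite unfoldings *)
CoInductive st_eq : stype -> stype -> Prop :=
| steq_end T0 T : st_unf T0 STEnd -> st_unf T STEnd -> st_eq T0 T
| steq_var T0 T X : st_unf T0 (STVar X) -> st_unf T (STVar X) -> st_eq T0 T
| steq_sel T0 T bs cs :
    st_unf T0 (STSel bs) -> st_unf T (STSel cs) ->
    (forall l B T1, In (l, B, T1) bs -> exists T', In (l, B, T') cs /\ st_eq T1 T') ->
    (forall l B T', In (l, B, T') cs -> exists T1, In (l, B, T1) bs /\ st_eq T1 T') ->
    st_eq T0 T
| steq_bra T0 T bs cs :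
    st_unf T0 (STBra bs) -> st_unf T (STBra cs) ->
    (forall l B T1, In (l, B, T1) bs -> exists T', In (l, B, T') cs /\ st_eq T1 T') ->
    (forall l B T', In (l, B, T') cs -> exists T1, In (l, B, T1) bs /\ st_eq T1 T') ->
    st_eq T0 T.

Inductive typed : list stype -> list base -> proc -> stype -> Prop :=
| t_bra Th G pbs tbs :
    (forall l B T0, In (l, B, T0) tbs ->
       exists P, In (l, P) pbs /\ typed Th (B :: G) P T0) ->
    typed Th G (PBra pbs) (STBra tbs)
| t_sel Th G l a P tbs B T0 :
    In (l, B, T0) tbs -> vterm_has_type G a B -> typed Th G P T0 ->
    typed Th G (PSel l a P) (STSel tbs)
| t_rec Th G P T0 : typed (T0 :: Th) G P T0 -> typed Th G (PRec P) T0
| t_pvar Th G X T0 : nth_error Th X = Some T0 -> typed Th G (PVar X) T0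
| t_if Th G A P Q T0 :
    pred_bool G A -> typed Th G P T0 -> typed Th G Q T0 -> typed Th G (PIf A P Q) T0
| t_nil Th G : typed Th G PNil STEnd
| t_eq Th G P T0 T1 : typed Th G P T0 -> st_eq T0 T1 -> typed Th G P T1.

Definition flags (M : mon) (P : proc) : Prop :=
  exists (t : list ext_act) (P' : proc), sys_weak (Sys P M) t (Sys P' MNoP).

Definition mon_sound (M : mon) (S : stype) : Prop :=
  forall P : proc, proc_wf P -> flags M P -> ~ typed [] [] P S.

Definition mon_complete (M : mon) (S : stype) : Prop :=
  forall P : proc, proc_wf P -> ~ typed [] [] P S -> flags M P.

(* Main.v *)
Require Import Defs.
From Stdlib Require Import ZArith String List Bool Arith Lia.
Import ListNotations.

Definition stype_ind' (P : stype -> Prop)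
  (HSel : forall bs, Forall (fun x => P (snd x)) bs -> P (STSel bs))
  (HBra : forall bs, Forall (fun x => P (snd x)) bs -> P (STBra bs))
  (HRec : forall T, P T -> P (STRec T))
  (HVar : forall X, P (STVar X))
  (HEnd : P STEnd) : forall T, P T :=
  fix f T := match T as T0 return P T0 with
  | STSel bs => HSel bs ((fix g (bs : list (label*base*stype)) : Forall (fun x => P (snd x)) bs :=
        match bs with [] => Forall_nil _
        | x :: bs' => Forall_cons x (match x as x0 return P (snd x0) with (_, T1) => f T1 end) (g bs') end) bs)
  | STBra bs => HBra bs ((fix g (bs : list (label*base*stype)) : Forall (fun x => P (snd x)) bs :=
        match bs with [] => Forall_nil _
        | x :: bs' => Forall_cons x (match x as x0 return P (snd x0) with (_, T1) => f T1 end) (g bs') end) bs)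
  | STRec T => HRec T (f T)
  | STVar X => HVar X
  | STEnd => HEnd
  end.

Lemma closed_sel n bs : st_closed_at n (STSel bs) <-> Forall (fun x => st_closed_at n (snd x)) bs.
Proof.
  induction bs as [|[[l B] T1] bs IH]; simpl in *. split; auto.
  rewrite Forall_cons_iff, IH. simpl. tauto.
Qed.
Lemma closed_bra n bs : st_closed_at n (STBra bs) <-> Forall (fun x => st_closed_at n (snd x)) bs.
Proof.
  induction bs as [|[[l B] T1] bs IH]; simpl in *. split; auto.
  rewrite Forall_cons_iff, IH. simpl. tauto.
Qed.
Lemma wf_sel bs : st_wf (STSel bs) -> Forall (fun x => st_wf (snd x)) bs.
Proof.
  simpl. intros [_ [_ H]]. induction bs as [|[[l B] T1] bs IH]; simpl in *; auto.
  destruct H. constructor; auto.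
Qed.
Lemma wf_bra bs : st_wf (STBra bs) -> Forall (fun x => st_wf (snd x)) bs.
Proof.
  simpl. intros [_ [_ H]]. induction bs as [|[[l B] T1] bs IH]; simpl in *; auto.
  destruct H. constructor; auto.
Qed.

Lemma map_id_forall (f : stype -> stype) (bs : list (label*base*stype)) :
  Forall (fun x => f (snd x) = snd x) bs -> map (fun '(l, B, T1) => (l, B, f T1)) bs = bs.
Proof.
  induction 1 as [|[[l B] T1] bs H _ IH]; simpl in *; auto. rewrite H, IH; auto.
Qed.

Lemma map_comp_forall (f g h : stype -> stype) (bs : list (label*base*stype)) :
  Forall (fun x => f (g (snd x)) = h (snd x)) bs ->
  map (fun '(l, B, T1) => (l, B, f T1)) (map (fun '(l, B, T1) => (l, B, g T1)) bs)
  = map (fun '(l, B, T1) => (l, B, h T1)) bs.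
Proof.
  induction 1 as [|[[l B] T1] bs H _ IH]; simpl in *; auto. rewrite H, IH; auto.
Qed.

Lemma shift_closed : forall T n c, st_closed_at n T -> n <= c -> st_shift c T = T.
Proof.
  induction T using stype_ind'; intros n c Hc Hle.
  - apply closed_sel in Hc. simpl. f_equal. apply map_id_forall.
    rewrite Forall_forall in *. intros x Hx. eapply H; eauto.
  - apply closed_bra in Hc. simpl. f_equal. apply map_id_forall.
    rewrite Forall_forall in *. intros x Hx. eapply H; eauto.
  - simpl in *. f_equal. eapply IHT; eauto. lia.
  - simpl in *. destruct (Nat.leb c X) eqn:E; auto. apply Nat.leb_le in E; lia.
  - reflexivity.
Qed.

Lemma subst_closed : forall T n k U, st_closed_at n T -> n <= k -> st_subst k U T = T.
Proof.
  induction T using stype_ind'; intros n k U Hc Hle.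
  - apply closed_sel in Hc. simpl. f_equal. apply map_id_forall.
    rewrite Forall_forall in *. intros x Hx. eapply H; eauto.
  - apply closed_bra in Hc. simpl. f_equal. apply map_id_forall.
    rewrite Forall_forall in *. intros x Hx. eapply H; eauto.
  - simpl in *. f_equal. eapply IHT; eauto. lia.
  - simpl in *. destruct (Nat.eqb X k) eqn:E. apply Nat.eqb_eq in E; lia.
    destruct (Nat.ltb k X) eqn:E2; auto. apply Nat.ltb_lt in E2; lia.
  - reflexivity.
Qed.

Lemma closed_mono : forall T n m, st_closed_at n T -> n <= m -> st_closed_at m T.
Proof.
  induction T using stype_ind'; intros n m Hc Hle.
  - apply closed_sel in Hc. apply closed_sel.
    rewrite Forall_forall in *. intros x Hx. eapply H; eauto.
  - apply closed_bra in Hc. apply closed_bra.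
    rewrite Forall_forall in *. intros x Hx. eapply H; eauto.
  - simpl in *. eapply IHT; eauto. lia.
  - simpl in *. lia.
  - simpl; auto.
Qed.

Fixpoint cl (k : nat) (r : list stype) (T : stype) : stype :=
  match T with
  | STSel bs => STSel (map (fun '(l, B, T1) => (l, B, cl k r T1)) bs)
  | STBra bs => STBra (map (fun '(l, B, T1) => (l, B, cl k r T1)) bs)
  | STRec T0 => STRec (cl (S k) r T0)
  | STVar X => if Nat.ltb X k then STVar X else nth (X - k) r STEnd
  | STEnd => STEnd
  end.

Lemma forall_map_snd (P : stype -> Prop) (f : stype -> stype) (bs : list (label*base*stype)) :
  Forall (fun x => P (f (snd x))) bs -> Forall (fun x => P (snd x)) (map (fun '(l, B, T1) => (l, B, f T1)) bs).
Proof.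
  induction 1 as [|[[l B] T1] bs H _ IH]; simpl in *; auto.
Qed.

Lemma cl_closed : forall T k r, st_closed_at (k + length r) T -> Forall (st_closed_at 0) r ->
  st_closed_at k (cl k r T).
Proof.
  induction T using stype_ind'; intros k r Hc Hr.
  - apply closed_sel in Hc. simpl. apply closed_sel. apply forall_map_snd.
    rewrite Forall_forall in H, Hc |- *. intros x Hx. eapply H; eauto.
  - apply closed_bra in Hc. simpl. apply closed_bra. apply forall_map_snd.
    rewrite Forall_forall in H, Hc |- *. intros x Hx. eapply H; eauto.
  - simpl in *. eapply IHT; eauto.
  - simpl in *. destruct (Nat.ltb X k) eqn:E. simpl. apply Nat.ltb_lt in E; lia.
    apply Nat.ltb_ge in E. eapply closed_mono with 0; [|lia].
    rewrite Forall_forall in Hr. apply Hr. apply nth_In. lia.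
  - simpl; auto.
Qed.

Lemma subst_cl : forall T k r U, Forall (st_closed_at 0) r -> st_closed_at 0 U ->
  st_subst k U (cl (S k) r T) = cl k (U :: r) T.
Proof.
  induction T using stype_ind'; intros k r U Hr HU.
  - simpl. f_equal. apply map_comp_forall.
    rewrite Forall_forall in H |- *. intros x Hx. eapply H; eauto.
  - simpl. f_equal. apply map_comp_forall.
    rewrite Forall_forall in H |- *. intros x Hx. eapply H; eauto.
  - simpl. f_equal. rewrite (shift_closed U 0 0); auto. 
  - simpl. destruct (Nat.ltb X (S k)) eqn:E.
    + apply Nat.ltb_lt in E. simpl.
      destruct (Nat.eqb X k) eqn:E1.
      * apply Nat.eqb_eq in E1. subst. rewrite Nat.ltb_irrefl, Nat.sub_diag. reflexivity.
      * apply Nat.eqb_neq in E1.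
        assert (Nat.ltb k X = false) by (apply Nat.ltb_ge; lia). rewrite H.
        assert (Nat.ltb X k = true) by (apply Nat.ltb_lt; lia). rewrite H0. auto.
    + apply Nat.ltb_ge in E. assert (Nat.ltb X k = false) by (apply Nat.ltb_ge; lia).
      rewrite H. replace (X - k) with (S (X - S k)) by lia. simpl.
      destruct (Nat.lt_ge_cases (X - S k) (length r)).
      * eapply subst_closed with 0; [|lia].
        rewrite Forall_forall in Hr. apply Hr. apply nth_In. lia.
      * rewrite nth_overflow by lia. reflexivity.
  - reflexivity.
Qed.

Lemma cl_nil : forall T k, st_closed_at k T -> cl k [] T = T.
Proof.
  induction T using stype_ind'; intros k Hc.
  - apply closed_sel in Hc. simpl. f_equal. apply map_id_forall.
    rewrite Forall_forall in *. intros x Hx. eapply H; eauto.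
  - apply closed_bra in Hc. simpl. f_equal. apply map_id_forall.
    rewrite Forall_forall in *. intros x Hx. eapply H; eauto.
  - simpl in *. f_equal. eauto.
  - simpl in *. destruct (Nat.ltb X k) eqn:E; auto. apply Nat.ltb_ge in E; lia.
  - reflexivity.
Qed.

Inductive genv : list stype -> Prop :=
| ge_nil : genv []
| ge_cons r T : genv r -> st_wf (STRec T) -> st_closed_at (length r) (STRec T) ->
    genv (cl 0 r (STRec T) :: r).

Lemma genv_closed r : genv r -> Forall (st_closed_at 0) r.
Proof.
  induction 1; constructor; auto. apply (cl_closed (STRec T) 0 r); auto.
Qed.

Lemma genv_nth : forall r, genv r -> forall X U, nth_error r X = Some U ->
  exists r' T, genv r' /\ length r' + X + 1 = length r /\ st_wf (STRec T) /\
    st_closed_at (length r') (STRec T) /\ U = cl 0 r' (STRec T).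
Proof.
  induction 1; intros X U HX. destruct X; discriminate.
  destruct X; simpl in HX.
  - inversion HX; subst. exists r, T. split; [|split; [simpl; lia|split; [|split]]]; auto.
  - destruct (IHgenv _ _ HX) as (r' & T' & K1 & K2 & K3 & K4 & K5).
    exists r', T'. split; [|split; [simpl; lia|split; [|split]]]; auto.
Qed.

Definition G T := exists r T', genv r /\ st_wf T' /\ st_closed_at (length r) T' /\ T = cl 0 r T'.
Definition goodh H := H = STEnd \/
  (exists bs, H = STSel bs /\ forall l B T1, In (l,B,T1) bs -> G T1) \/
  (exists bs, H = STBra bs /\ forall l B T1, In (l,B,T1) bs -> G T1).

Lemma unf_aux : forall n r k T, length r - k = n -> genv r -> k <= length r ->
  st_wf T -> st_closed_at (length r) T -> (forall j, j < k -> st_guarded_in j T) ->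
  exists H, st_unf (cl 0 r T) H /\ goodh H.
Proof.
  induction n as [n IHn] using lt_wf_ind.
  intros r k T; revert r k. induction T; intros r k En Hr Hk Hw Hc Hg.
  - eexists; split; [simpl; apply unf_sel|]. right; left. eexists; split; [reflexivity|].
    intros l B T1 Hin. apply in_map_iff in Hin as [[[l' B'] T1'] [Heq Hin']].
    inversion Heq; subst. exists r, T1'. repeat split; auto.
    + apply wf_sel in Hw. rewrite Forall_forall in Hw. apply (Hw _ Hin').
    + apply closed_sel in Hc. rewrite Forall_forall in Hc. apply (Hc _ Hin').
  - eexists; split; [simpl; apply unf_bra|]. right; right. eexists; split; [reflexivity|].
    intros l B T1 Hin. apply in_map_iff in Hin as [[[l' B'] T1'] [Heq Hin']].
    inversion Heq; subst. exists r, T1'. repeat split; auto.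
    + apply wf_bra in Hw. rewrite Forall_forall in Hw. apply (Hw _ Hin').
    + apply closed_bra in Hc. rewrite Forall_forall in Hc. apply (Hc _ Hin').
  - simpl in Hw. destruct Hw as [Hg0 Hw].
    assert (Hg' : genv (cl 0 r (STRec T) :: r)) by (constructor; simpl; auto).
    destruct (IHT (cl 0 r (STRec T) :: r) (S k)) as [H [Hu Hgood]].
    + simpl; lia.
    + exact Hg'.
    + simpl; lia.
    + exact Hw.
    + exact Hc.
    + intros j Hj. destruct j; auto. apply (Hg j). lia.
    + exists H; split; auto. simpl. apply unf_rec.
      rewrite subst_cl; auto. apply genv_closed; auto.
      apply (cl_closed (STRec T) 0 r); auto. apply genv_closed; auto.
  - simpl in Hc. destruct (Nat.lt_ge_cases X k).
    + specialize (Hg X H). simpl in Hg. congruence.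
    + assert (HX : nth_error r X = Some (nth X r STEnd)) by (apply nth_error_nth'; lia).
      destruct (genv_nth r Hr X _ HX) as (r' & T' & K1 & K2 & K3 & K4 & K5).
      simpl. rewrite Nat.sub_0_r, K5.
      apply (IHn (length r' - 0)) with (k := 0); auto; try lia.
  - exists STEnd; split; [constructor | left; auto].
Qed.

Lemma unf_G : forall X, G X -> exists H, st_unf X H /\ goodh H.
Proof.
  intros X (r & T & Hr & Hw & Hc & ->). eapply unf_aux with (k := 0); eauto; lia.
Qed.

Lemma G_refl : forall X, G X -> st_eq X X.
Proof.
  cofix CIH. intros X HG.
  destruct (unf_G X HG) as [H [Hu [HE | [[bs [HE Hb]] | [bs [HE Hb]]]]]]; subst.
  - apply steq_end; auto.
  - apply (steq_sel X X bs bs); auto; intros l B T1 Hin; exists T1; split; auto; apply CIH; eauto.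
  - apply (steq_bra X X bs bs); auto; intros l B T1 Hin; exists T1; split; auto; apply CIH; eauto.
Qed.

Lemma st_unf_det : forall T H1, st_unf T H1 -> forall H2, st_unf T H2 -> H1 = H2.
Proof. induction 1; intros H2' Hu; inversion Hu; subst; auto. Qed.

Lemma eq_right : forall X Y Y', st_eq X Y -> (forall H, st_unf Y H -> st_unf Y' H) -> st_eq X Y'.
Proof.
  intros X Y Y' E Hf. destruct E;
  [eapply steq_end|eapply steq_var|eapply steq_sel|eapply steq_bra]; eauto.
Qed.

Fixpoint dv (B : base) : value := match B with
  | BInt => VInt 0%Z | BStr => VStr EmptyString | BBool => VBool true
  | BPair B1 B2 => VPair (dv B1) (dv B2) end.
Lemma dv_in B : value_in (dv B) B.
Proof. induction B; simpl; auto. Qed.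

Fixpoint pof (T : stype) : proc := match T with
  | STSel bs => match bs with [] => PNil | (l, B, T1) :: _ => PSel l (TVal (dv B)) (pof T1) end
  | STBra bs => PBra (map (fun '(l, B, T1) => (l, pof T1)) bs)
  | STRec T0 => PRec (pof T0)
  | STVar X => PVar X
  | STEnd => PNil end.

Lemma pof_guarded : forall T j, st_guarded_in j T -> proc_guarded_in j (pof T).
Proof.
  induction T; intros j Hj; simpl in *; auto.
  destruct bs as [|[[l B] T1] bs]; simpl; auto.
Qed.

Lemma pof_wf : forall T, st_wf T -> proc_wf (pof T).
Proof.
  induction T using stype_ind'; intros Hw.
  - pose proof (wf_sel _ Hw) as Fw.
    destruct bs as [|[[l B] T1] bs]; simpl; auto.
    inversion H; inversion Fw; subst. simpl in *. auto.
  - pose proof (wf_bra _ Hw) as Fw. simpl. clear Hw.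
    induction bs as [|[[l B] T1] bs IH]; simpl; auto.
    inversion H; inversion Fw; subst. simpl in *. split; auto. exact (IH H3 H7).
  - simpl in *. destruct Hw; split; auto. apply pof_guarded; auto.
  - simpl; auto.
  - simpl; auto.
Qed.

Lemma typ : forall T r G0, genv r -> st_wf T -> st_closed_at (length r) T ->
  typed r G0 (pof T) (cl 0 r T).
Proof.
  induction T using stype_ind'; intros r G0 Hr Hw Hc.
  - pose proof (wf_sel _ Hw) as Fw. apply closed_sel in Hc.
    destruct bs as [|[[l B] T1] bs].
    + simpl in Hw. destruct Hw as [Hne _]. congruence.
    + simpl. inversion H; inversion Fw; inversion Hc; subst. simpl in *.
      apply t_sel with B (cl 0 r T1); [left; reflexivity | apply dv_in | auto].
  - pose proof (wf_bra _ Hw) as Fw. apply closed_bra in Hc.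
    simpl. apply t_bra. intros l B T' Hin.
    apply in_map_iff in Hin as [[[l' B'] T1] [Heq Hin']]. inversion Heq; subst.
    exists (pof T1). split.
    + apply in_map_iff. exists (l, B, T1); auto.
    + rewrite Forall_forall in H, Fw, Hc.
      apply (H _ Hin'); [exact Hr | apply (Fw _ Hin') | apply (Hc _ Hin')].
  - simpl. assert (Hg : genv (cl 0 r (STRec T) :: r)) by (constructor; auto).
    simpl in Hg. simpl in Hw. destruct Hw as [Hg0 Hw'].
    apply t_rec. eapply t_eq. apply IHT; auto.
    apply eq_right with (cl 0 (STRec (cl 1 r T) :: r) T).
    + apply G_refl. exists (STRec (cl 1 r T) :: r), T; repeat split; auto.
    + intros H Hu. apply unf_rec. rewrite subst_cl; auto. apply genv_closed; auto.
      exact (cl_closed (STRec T) 0 r Hc (genv_closed _ Hr)).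
  - simpl in *. rewrite Nat.sub_0_r. apply t_pvar. apply nth_error_nth'. auto.
  - simpl. apply t_nil.
Qed.

Lemma nil_typed : forall Th G0 P T, typed Th G0 P T -> P = PNil -> st_unf T STEnd.
Proof.
  induction 1; intros E; try discriminate.
  - constructor.
  - specialize (IHtyped E). destruct H0; try assumption; exfalso;
    match goal with Ha : st_unf ?A ?Hd, Hb : st_unf ?A STEnd |- _ =>
      pose proof (st_unf_det _ _ Ha _ Hb); discriminate end.
Qed.

Lemma nil_run : forall s t s', sys_weak s t s' -> forall M P', s = Sys PNil M ->
  s' = Sys P' MNoP -> forall P, sys_weak (Sys P M) t (Sys P MNoP).
Proof.
  induction 1; intros M P' E1 E2 P; subst.
  - inversion E2; subst. constructor.
  - inversion H; subst; try match goal with Hp : proc_step PNil _ _ |- _ => inversion Hp end.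
    eapply sw_tau; [apply ss_tauM; eauto | eapply IHsys_weak; eauto].
  - inversion H; subst.
    + eapply sw_ext; [apply ss_up; eauto | eapply IHsys_weak; eauto].
    + eapply sw_ext; [apply ss_down; eauto | eapply IHsys_weak; eauto].
Qed.

Theorem mainTheorem4 :
  forall S : stype,
    st_wf S -> st_closed S -> ~ st_eq S STEnd ->
    ~ (exists M : mon, mon_wf M /\ mon_sound M S /\ mon_complete M S).
Proof.
  intros S Hw Hc Hne [M [_ [Hs Hcmp]]].
  assert (Hnt : ~ typed [] [] PNil S).
  { intro Ht. apply Hne. apply steq_end. eapply nil_typed; eauto. constructor. }
  destruct (Hcmp PNil I Hnt) as [t [P' Hrun]].
  apply (Hs (pof S)).
  - apply pof_wf; auto.
  - exists t, (pof S). eapply nil_run; eauto.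
  - pose proof (typ S [] [] ge_nil Hw Hc) as Ht. rewrite cl_nil in Ht; auto.
Qed.
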